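(* Let $\overline{\mathcal R}_{Moon}$ be the function obtained from the lunar disturbing function expansion $$\mathcal R_k=\sum_{l\ge 2}\sum_{m,p,s,q=0}^{l}\sum_{j,r\in\mathbb Z}(-1)^{m+s}(-1)^{[m/2]}\frac{\mathcal G m_k\,\epsilon_m\epsilon_s}{2a_k}\frac{(l-s)!}{(l+m)!}\left(\frac{a}{a_k}\right)^{l}F_{lmp}(I)F_{lsq}(I_k)H_{lpj}(e)G_{lqr}(e_k)$$ $$\times\Big\{(-1)^{k_2}U_l^{m,-s}\cos\big(\bar\theta_{lmpj}+\bar\theta'_{lsqr}-y_s\pi\big)+(-1)^{k_3}U_l^{m,s}\cos\big(\bar\theta_{lmpj}-\bar\theta'_{lsqr}-y_s\pi\big)\Big\}$$ by keeping only the terms with $l=2$ and averaging over the mean anomalies $M$ of the point mass and $M_k$ of the Moon (i.e. keeping only the terms with $l-2p+j=0$ and $l-2q+r=0$). Let $\overline{\mathcal R}_{Sun}$ be obtained in the same way from the solar expansion $$\mathcal R^{*}=\mathcal G m^{*}\sum_{l\ge 2}\sum_{m=0}^{l}\sum_{p=0}^{l}\sum_{h=0}^{l}\sum_{q,j\in\mathbb Z}\frac{a^{l}}{(a^{*})^{l+1}}\epsilon_m\frac{(l-m)!}{(l+m)!}F_{lmp}(I)F_{lmh}(I^{*})H_{lpq}(e)G_{lhj}(e^{*})\cos\varphi_{lmphqj},$$ $$\varphi_{lmphqj}=(l-2p)\omega+(l-2p+q)M-(l-2h)\omega^{*}-(l-2h+j)M^{*}+m(\Omega-\Omega^{*}),$$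 by keeping only the terms with $l=2$ and averaging over $M$ and $M^{*}$ (i.e. keeping only terms with $l-2p+q=0$ and $l-2h+j=0$). Then $\overline{\mathcal R}_{Moon}$ does not depend on the argument of perigee $\omega_k$ of the Moon, and $\overline{\mathcal R}_{Sun}$ does not depend on the argument of perigee $\omega^{*}$ of the Sun.
   Context: $a,e,I,\omega,\Omega,M$ are the orbital elements (semi-major axis, eccentricity, inclination, argument of perigee, longitude of ascending node, mean anomaly) of an Earth-orbiting point mass referred to the celestial equator; $a_k,e_k,I_k,\omega_k,\Omega_k,M_k$ are the Moon's elements referred to the ecliptic, $m_k$ its mass; $a^*,e^*,I^*,\omega^*,\Omega^*,M^*$ are the Sun's elements referred to the celestial equator, $m^*$ its mass; $\mathcal G$ is the gravitational constant; $\varepsilon$ is the obliquity of the ecliptic. $\epsilon_m=1$ if $m=0$, $\epsilon_m=2$ otherwise. $\bar\theta_{lmpj}=(l-2p)\omega+(l-2p+j)M+m\Omega$, $\bar\theta'_{lsqr}=(l-2q)\omega_k+(l-2q+r)M_k+s(\Omega_k-\pi/2)$; $y_s=0$ for $s$ even, $1/2$ for $s$ odd; $t=(l-1)\bmod 2$, $k_2=t(m+s-1)+1$, $k_3=t(m+s)$; $U_l^{m,s}=\sum_{r=\max(0,-(m+s))}^{\min(l-s,l-m)}(-1)^{l-m-r}\binom{l+m}{m+s+r}\binom{l-m}{r}\cos^{m+s+2r}(\varepsilon/2)\sin^{-m-s+2(l-r)}(\varepsilon/2)$. Hansen coefficients $X_k^{n,m}(e)$ are defined by $(r/a)^n e^{imf}=\sum_{k\in\mathbb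 Z}X_k^{n,m}(e)e^{ikM}$ ($f$ true anomaly); $H_{lpj}(e)=X^{l,l-2p}_{l-2p+j}(e)$, $G_{lqr}(e')=X^{-(l+1),l-2q}_{l-2q+r}(e')$. $F_{lmp}(I)$ is Kaula's inclination function $F_{lmp}(I)=\sum_{t=0}^{\min\{p,[\frac{l-m}{2}]\}}\frac{(2l-2t)!}{t!(l-t)!(l-m-2t)!2^{2l-2t}}\sin^{l-m-2t}I\sum_{s=0}^{m}\binom{m}{s}\cos^{s}I\sum_{c}\binom{l-m-2t+s}{c}\binom{m-s}{p-t-c}(-1)^{c-[\frac{l-m}{2}]}$, with $[\cdot]$ the integer part and $c$ over all values making the binomials nonzero. *)

(* Defs.v *)
From Stdlib Require Import Reals ZArith List ClassicalEpsilon.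
From Coquelicot Require Import Coquelicot.
Import ListNotations.
Open Scope R_scope.

(* sumZ lo hi f = sum_{k = lo}^{hi} f k  (0 if hi < lo) *)
Definition sumZ (lo hi : Z) (f : Z -> R) : R :=
  fold_right Rplus 0
    (map (fun k : nat => f (lo + Z.of_nat k)%Z) (seq 0 (Z.to_nat (hi - lo + 1)))).

Definition binomZ (n k : Z) : R :=
  if ((0 <=? k)%Z && (k <=? n)%Z)%bool then Binomial.C (Z.to_nat n) (Z.to_nat k) else 0.

Definition factZ (n : Z) : R := INR (fact (Z.to_nat n)).

(* eccentric anomaly: the (unique, for 0 <= e < 1) solution E of E - e sin E = M *)
Definition ecc_anomaly (e M : R) : R :=
  epsilon (inhabits 0) (fun E => E - e * sin E = M).

Definition r_over_a (e M : R) : R := 1 - e * cos (ecc_anomaly e M).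

Definition true_anomaly (e M : R) : R :=
  2 * atan (sqrt ((1 + e) / (1 - e)) * tan (ecc_anomaly e M / 2)).

(* Hansen coefficient X_k^{n,m}(e): the k-th Fourier coefficient in M of
   (r/a)^n e^{i m f}.  It is real (the imaginary part vanishes by the
   symmetry M -> -M), so we define it as the real part
   (1/2pi) int_0^{2pi} (r/a)^n cos(m f - k M) dM. *)
Definition hansen (n m k : Z) (e : R) : R :=
  / (2 * PI) * RInt (fun M => powerRZ (r_over_a e M) n
                               * cos (IZR m * true_anomaly e M - IZR k * M)) 0 (2 * PI).

Definition Hcoef (l p j : Z) (e : R) : R := hansen l (l - 2 * p) (l - 2 * p + j) e.
Definition Gcoef (l q r : Z) (e : R) : R :=
  hansen (- (l + 1)) (l - 2 * q) (l - 2 * q + r) e.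

Definition kaulaF (l m p : Z) (I : R) : R :=
  sumZ 0 (Z.min p ((l - m) / 2)) (fun t =>
    factZ (2 * l - 2 * t)
      / (factZ t * factZ (l - t) * factZ (l - m - 2 * t) * 2 ^ Z.to_nat (2 * l - 2 * t))
    * sin I ^ Z.to_nat (l - m - 2 * t)
    * sumZ 0 m (fun s =>
        binomZ m s * cos I ^ Z.to_nat s
        (* c ranges over a superset of all values making the binomials nonzero;
           binomZ vanishes elsewhere *)
        * sumZ 0 (2 * l) (fun c =>
            binomZ (l - m - 2 * t + s) c * binomZ (m - s) (p - t - c)
            * powerRZ (-1) (c - (l - m) / 2)))).

Definition Ufun (eps : R) (l m s : Z) : R :=
  sumZ (Z.max 0 (- (m + s))) (Z.min (l - s) (l - m)) (fun r =>
    powerRZ (-1) (l - m - r) * binomZ (l + m) (m + s + r) * binomZ (l - m) r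
    * powerRZ (cos (eps / 2)) (m + s + 2 * r)
    * powerRZ (sin (eps / 2)) (- m - s + 2 * (l - r))).

Definition eps_idx (m : Z) : R := if (m =? 0)%Z then 1 else 2.
Definition y_idx (s : Z) : R := if Z.even s then 0 else 1 / 2.

(* Gc = gravitational constant, mk = lunar mass, eps = obliquity *)
Definition moon_term (Gc mk eps : R)
    (a e I om Om M : R) (ak ek Ik omk Omk Mk : R)
    (l m p s q j r : Z) : R :=
  let th := IZR (l - 2 * p) * om + IZR (l - 2 * p + j) * M + IZR m * Om in
  let th' := IZR (l - 2 * q) * omk + IZR (l - 2 * q + r) * Mk + IZR s * (Omk - PI / 2) in
  let t := ((l - 1) mod 2)%Z in
  let k2 := (t * (m + s - 1) + 1)%Z in
  let k3 := (t * (m + s))%Z in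
  powerRZ (-1) (m + s) * powerRZ (-1) (m / 2)
  * (Gc * mk * eps_idx m * eps_idx s / (2 * ak))
  * (factZ (l - s) / factZ (l + m))
  * (a / ak) ^ Z.to_nat l
  * kaulaF l m p I * kaulaF l s q Ik * Hcoef l p j e * Gcoef l q r ek
  * (powerRZ (-1) k2 * Ufun eps l m (- s) * cos (th + th' - y_idx s * PI)
     + powerRZ (-1) k3 * Ufun eps l m s * cos (th - th' - y_idx s * PI)).

(* averaged, l = 2 lunar disturbing function: keep l = 2 and the terms with
   l - 2p + j = 0 and l - 2q + r = 0 *)
Definition Rbar_Moon (Gc mk eps : R)
    (a e I om Om M : R) (ak ek Ik omk Omk Mk : R) : R :=
  sumZ 0 2 (fun m => sumZ 0 2 (fun p => sumZ 0 2 (fun s => sumZ 0 2 (fun q =>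
    moon_term Gc mk eps a e I om Om M ak ek Ik omk Omk Mk
      2 m p s q (2 * p - 2) (2 * q - 2))))).

Definition sun_term (Gc ms : R)
    (a e I om Om M : R) (as_ es Is oms Oms Ms : R)
    (l m p h q j : Z) : R :=
  let phi := IZR (l - 2 * p) * om + IZR (l - 2 * p + q) * M
             - IZR (l - 2 * h) * oms - IZR (l - 2 * h + j) * Ms
             + IZR m * (Om - Oms) in
  Gc * ms * (a ^ Z.to_nat l / as_ ^ Z.to_nat (l + 1))
  * eps_idx m * (factZ (l - m) / factZ (l + m))
  * kaulaF l m p I * kaulaF l m h Is * Hcoef l p q e * Gcoef l h j es
  * cos phi.

(* averaged, l = 2 solar disturbing function: l - 2p + q = 0, l - 2h + j = 0 *)
Definition Rbar_Sun (Gc ms : R)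
    (a e I om Om M : R) (as_ es Is oms Oms Ms : R) : R :=
  sumZ 0 2 (fun m => sumZ 0 2 (fun p => sumZ 0 2 (fun h =>
    sun_term Gc ms a e I om Om M as_ es Is oms Oms Ms
      2 m p h (2 * p - 2) (2 * h - 2)))).

(* Main.v *)
Require Import Defs.
From Stdlib Require Import Reals Lra Nsatz ClassicalEpsilon Ranalysis5.
From Coquelicot Require Import Coquelicot.
Open Scope R_scope.

Definition kep (e E : R) := E - e * sin E.

Lemma kep_deriv e x : derivable_pt_lim (kep e) x (1 - e * cos x).
Proof.
  unfold kep.
  replace (1 - e * cos x) with (1 - (0 * sin x + e * cos x)) by ring.
  apply derivable_pt_lim_minus. apply derivable_pt_lim_id.
  apply derivable_pt_lim_mult. apply derivable_pt_lim_const. apply derivable_pt_lim_sin.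
Qed.

Lemma kep_cont e : continuity (kep e).
Proof.
  intro x. apply derivable_continuous_pt. exists (1 - e * cos x). apply kep_deriv.
Qed.

Lemma kep_incr e x y : 0 <= e < 1 -> x < y -> kep e x < kep e y.
Proof.
  intros He Hxy.
  destruct (MVT_cor2 (kep e) (fun x => 1 - e * cos x) x y Hxy) as [c [Hc _]].
  { intros; apply kep_deriv. }
  assert (0 < 1 - e * cos c).
  { pose proof (COS_bound c). nra. }
  nra.
Qed.

Lemma kep_surj e M : 0 <= e < 1 -> exists E, kep e E = M.
Proof.
  intros He.
  destruct (IVT (fun E => kep e E - M) (M - 1) (M + 1)) as [z [_ Hz]].
  - intro x. apply continuity_pt_minus. apply kep_cont. apply continuity_pt_const. intros a b; auto.
  - lra.
  - unfold kep. pose proof (SIN_bound (M-1)). nra.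
  - unfold kep. pose proof (SIN_bound (M+1)). nra.
  - exists z. lra.
Qed.

Lemma ecc_spec e M : 0 <= e < 1 -> kep e (ecc_anomaly e M) = M.
Proof.
  intros He. unfold ecc_anomaly, kep.
  apply (epsilon_spec (inhabits 0) (fun E => E - e * sin E = M)).
  destruct (kep_surj e M He) as [E HE]. exists E. exact HE.
Qed.

Lemma kep_inj e x y : 0 <= e < 1 -> kep e x = kep e y -> x = y.
Proof.
  intros He H. destruct (Rtotal_order x y) as [h|[h|h]]; auto.
  - pose proof (kep_incr e x y He h). lra.
  - pose proof (kep_incr e y x He h). lra.
Qed.

Lemma ecc_kep e E : 0 <= e < 1 -> ecc_anomaly e (kep e E) = E.
Proof.
  intros He. apply (kep_inj e); auto. apply ecc_spec; auto.
Qed.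

Lemma ecc_mono e M1 M2 : 0 <= e < 1 -> M1 < M2 -> ecc_anomaly e M1 < ecc_anomaly e M2.
Proof.
  intros He H. destruct (Rlt_or_le (ecc_anomaly e M1) (ecc_anomaly e M2)) as [h|h]; auto.
  destruct h as [h|h].
  - pose proof (kep_incr e _ _ He h). rewrite !ecc_spec in H0 by auto. lra.
  - apply (f_equal (kep e)) in h. rewrite !ecc_spec in h by auto. lra.
Qed.

Lemma ecc_cont e M : 0 <= e < 1 -> continuity_pt (ecc_anomaly e) M.
Proof.
  intros He.
  apply (continuity_pt_recip_interv (kep e) (ecc_anomaly e)
           (ecc_anomaly e M - 1) (ecc_anomaly e M + 1)).
  - lra.
  - intros; apply kep_incr; auto.
  - intros; unfold comp, id; apply ecc_spec; auto.
  - intros x H1 H2. split.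
    + rewrite <- (ecc_kep e (ecc_anomaly e M - 1)) by auto.
      destruct H1 as [H1|H1]. left; apply ecc_mono; auto. right; rewrite H1; auto.
    + rewrite <- (ecc_kep e (ecc_anomaly e M + 1)) by auto.
      destruct H2 as [H2|H2]. left; apply ecc_mono; auto. right; rewrite H2; auto.
  - intros; apply kep_cont.
  - pose proof (kep_incr e (ecc_anomaly e M - 1) (ecc_anomaly e M) He ltac:(lra)).
    pose proof (kep_incr e (ecc_anomaly e M) (ecc_anomaly e M + 1) He ltac:(lra)).
    rewrite ecc_spec in H, H0 by auto. lra.
Qed.
Definition psi (e E : R) := (2*(cos E - e)^2 - (1 - e*cos E)^2) / (1 - e*cos E)^5.
Definition Kf (e E : R) := sin E * cos E / (1-e*cos E)^2 - 2/3*e*sin E^3/(1-e*cos E)^3.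

Lemma D_pos e E : 0 <= e < 1 -> 0 < 1 - e * cos E.
Proof. intros. pose proof (COS_bound E). nra. Qed.

Lemma polyK (s c e : R) : s*s + c*c = 1 ->
  (3 * c ^ 6 * e ^ 4 - 12 * c ^ 5 * e ^ 3 +
   9 * c ^ 4 * s ^ 2 * e ^ 4 + 18 * c ^ 4 * e ^ 2 -
   24 * c ^ 3 * s ^ 2 * e ^ 3 - 12 * c ^ 3 * e +
   6 * c ^ 2 * s ^ 4 * e ^ 4 + 18 * c ^ 2 * s ^ 2 * e ^ 2 +
   3 * c ^ 2 - 12 * c * s ^ 4 * e ^ 3 + 
   6 * s ^ 4 * e ^ 2 - 3 * s ^ 2) = 3 * (1 - e*c)^2 *
  (- c ^ 2 * e ^ 2 + 2 * c ^ 2 - 2 * c * e + 2 * e ^ 2 - 1).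
Proof. intros. assert (H2 : s^2 = 1-c^2) by nra. replace (s^4) with ((s^2)^2) by ring. rewrite H2. ring. Qed.

Lemma Kf_deriv e E : 0 <= e < 1 -> is_derive (Kf e) E ((1 - e * cos E) * psi e E).
Proof.
  intros He. pose proof (D_pos e E He) as HD.
  unfold Kf, psi.
  auto_derive.
  - repeat split; apply Rgt_not_eq; repeat apply Rmult_lt_0_compat; lra.
  - pose proof (sin2_cos2 E) as Hs. unfold Rsqr in Hs.
    field_simplify; [| apply Rgt_not_eq; lra ..].
    match goal with |- ?a / ?b = ?c / ?d =>
      replace b with (3 * (1 - e*cos E)^6) by ring;
      replace d with ((1 - e*cos E)^4) by ring end.
    rewrite (polyK (sin E) (cos E) e Hs).
    field. lra.
Qed.

Lemma psi_cont e x : 0 <= e < 1 -> continuous (psi e) x.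
Proof.
  intros He. apply (ex_derive_continuous (psi e)). unfold psi. auto_derive.
  pose proof (D_pos e x He). apply Rgt_not_eq. repeat apply Rmult_lt_0_compat; lra.
Qed.

Lemma ecc_contC e x : 0 <= e < 1 -> continuous (ecc_anomaly e) x.
Proof. intros He. apply continuity_pt_filterlim. apply ecc_cont; auto. Qed.

Lemma int_psi e : 0 <= e < 1 -> RInt (fun M => psi e (ecc_anomaly e M)) 0 (2*PI) = 0.
Proof.
  intros He.
  assert (K0 : kep e 0 = 0) by (unfold kep; rewrite sin_0; ring).
  assert (K2 : kep e (2*PI) = 2*PI) by (unfold kep; rewrite sin_2PI; ring).
  rewrite <- K0 at 1. rewrite <- K2 at 1.
  rewrite <- (RInt_comp (fun M => psi e (ecc_anomaly e M)) (kep e) (fun E => 1 - e * cos E)).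
  - rewrite (RInt_ext _ (fun E => (1 - e * cos E) * psi e E)).
    + apply is_RInt_unique.
      assert (Hz : minus (Kf e (2*PI)) (Kf e 0) = 0).
      { unfold Kf, minus, plus, opp; simpl. rewrite sin_2PI, sin_0. field.
        split; apply Rgt_not_eq; apply D_pos; auto. }
      assert (Hi : is_RInt (fun E => (1 - e * cos E) * psi e E) 0 (2*PI) (minus (Kf e (2*PI)) (Kf e 0))).
      { apply (is_RInt_derive (Kf e) (fun E => (1 - e * cos E) * psi e E)).
        -- intros; apply Kf_deriv; auto.
        -- intros x _. apply (ex_derive_continuous (fun E => (1 - e * cos E) * psi e E)). unfold psi. auto_derive.
           pose proof (D_pos e x He). apply Rgt_not_eq. repeat apply Rmult_lt_0_compat; lra. }
      rewrite Hz in Hi. exact Hi.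
    + intros x _. rewrite ecc_kep by auto. reflexivity.
  - intros x _. apply (continuous_comp (ecc_anomaly e) (psi e)).
    apply ecc_contC; auto. apply psi_cont; auto.
  - intros x _. split.
    + apply is_derive_Reals. apply kep_deriv.
    + apply (ex_derive_continuous (fun E => 1 - e * cos E)). auto_derive. auto.
Qed.
Lemma cos_tf e E : 0 <= e < 1 -> cos (E/2) <> 0 ->
  cos (2 * atan (sqrt ((1+e)/(1-e)) * tan (E/2))) = (cos E - e)/(1 - e * cos E).
Proof.
  intros He Hb.
  assert (HE : cos E = 2 * cos (E/2) * cos (E/2) - 1).
  { rewrite <- cos_2a_cos. f_equal. field. }
  rewrite HE. rewrite cos_2a_cos, cos_atan.
  set (k := sqrt ((1+e)/(1-e))).
  assert (Hk : k * k = (1+e)/(1-e)).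
  { unfold k. apply sqrt_sqrt. unfold Rdiv; apply Rmult_le_pos; [lra|left; apply Rinv_0_lt_compat; lra]. }
  set (u := k * tan (E/2)).
  assert (Hu : 0 <= 1 + u²) by (pose proof (Rle_0_sqr u); lra).
  assert (Hsq : sqrt (1 + u²) * sqrt (1 + u²) = 1 + u²) by (apply sqrt_sqrt; auto).
  assert (Hsn : sqrt (1 + u²) <> 0).
  { intro h. rewrite h in Hsq. pose proof (Rle_0_sqr u). lra. }
  replace (2 * (1 / sqrt (1 + u²)) * (1 / sqrt (1 + u²)) - 1)
    with (2 / (sqrt (1 + u²) * sqrt (1 + u²)) - 1) by (field; auto).
  rewrite Hsq.
  assert (Hu2 : u² = (1+e)/(1-e) * (sin (E/2) * sin (E/2)) / (cos (E/2) * cos (E/2))).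
  { unfold u, Rsqr, tan. rewrite <- Hk. field. auto. }
  rewrite Hu2.
  pose proof (sin2_cos2 (E/2)) as Hs. unfold Rsqr in Hs.
  replace (sin (E/2) * sin (E/2)) with (1 - cos (E/2) * cos (E/2)) by lra.
  set (b := cos (E/2)) in *.
  assert (0 < b * b) by (assert (b*b <> 0) by (apply Rmult_integral_contrapositive; auto);
                         pose proof (Rle_0_sqr b); unfold Rsqr in *; lra).
  assert (bb : b * b <= 1) by (pose proof (Rle_0_sqr (sin (E/2))); unfold Rsqr in *; lra).
  assert (0 < 1 + e - 2 * e * (b*b)) by (pose proof (Rmult_le_pos e (1-b*b) ltac:(lra) ltac:(lra)); lra).
  field. repeat split; try lra.
Qed.

Lemma integrand_eq e M s : 0 <= e < 1 -> (s = 2 \/ s = -2) -> cos (ecc_anomaly e M / 2) <> 0 ->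
  powerRZ (r_over_a e M) (-3) * cos (s * true_anomaly e M - 0 * M) = psi e (ecc_anomaly e M).
Proof.
  intros He Hs Hc.
  unfold r_over_a, true_anomaly, psi.
  set (E := ecc_anomaly e M) in *.
  assert (Hcos : cos (s * (2 * atan (sqrt ((1 + e) / (1 - e)) * tan (E / 2))) - 0 * M)
     = 2 * ((cos E - e)/(1 - e * cos E)) * ((cos E - e)/(1 - e * cos E)) - 1).
  { rewrite <- cos_tf by auto. rewrite <- cos_2a_cos.
    destruct Hs as [-> | ->].
    - f_equal. ring.
    - rewrite <- cos_neg. f_equal. ring. }
  rewrite Hcos.
  change (powerRZ (1 - e * cos E) (-3)) with (/ ((1 - e * cos E) ^ 3)).
  pose proof (D_pos e E He). field. lra.
Qed.

Lemma ecc_val e x : 0 <= e < 1 -> kep e x = x -> ecc_anomaly e x = x.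
Proof. intros He H. rewrite <- H at 1. apply ecc_kep; auto. Qed.

Lemma hansen_zero e s : 0 <= e < 1 -> (s = 2 \/ s = -2) ->
  RInt (fun M => powerRZ (r_over_a e M) (-3) * cos (s * true_anomaly e M - 0 * M)) 0 (2*PI) = 0.
Proof.
  intros He Hs.
  set (phi := fun M => powerRZ (r_over_a e M) (-3) * cos (s * true_anomaly e M - 0 * M)).
  set (ps := fun M => psi e (ecc_anomaly e M)).
  assert (Hc : forall z, continuous ps z).
  { intro z. apply (continuous_comp (ecc_anomaly e) (psi e)).
    apply ecc_contC; auto. apply psi_cont; auto. }
  assert (E0 : ecc_anomaly e 0 = 0) by (apply ecc_val; auto; unfold kep; rewrite sin_0; ring).
  assert (EP : ecc_anomaly e PI = PI) by (apply ecc_val; auto; unfold kep; rewrite sin_PI; ring).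
  assert (E2 : ecc_anomaly e (2*PI) = 2*PI) by (apply ecc_val; auto; unfold kep; rewrite sin_2PI; ring).
  pose proof PI_RGT_0.
  assert (I1 : is_RInt phi 0 PI (RInt ps 0 PI)).
  { apply (is_RInt_ext ps). 
    - intros x Hx. rewrite Rmin_left, Rmax_right in Hx by lra.
      unfold ps, phi. rewrite integrand_eq; auto.
      pose proof (ecc_mono e 0 x He ltac:(lra)). pose proof (ecc_mono e x PI He ltac:(lra)).
      apply Rgt_not_eq. apply cos_gt_0; lra.
    - apply (RInt_correct ps). apply (ex_RInt_continuous ps). intros; apply Hc. }
  assert (I2 : is_RInt phi PI (2*PI) (RInt ps PI (2*PI))).
  { apply (is_RInt_ext ps). 
    - intros x Hx. rewrite Rmin_left, Rmax_right in Hx by lra.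
      unfold ps, phi. rewrite integrand_eq; auto.
      pose proof (ecc_mono e PI x He ltac:(lra)). pose proof (ecc_mono e x (2*PI) He ltac:(lra)).
      apply Rlt_not_eq. apply cos_lt_0; lra.
    - apply (RInt_correct ps). apply (ex_RInt_continuous ps). intros; apply Hc. }
  pose proof (is_RInt_Chasles _ _ _ _ _ _ I1 I2) as I3.
  rewrite (RInt_Chasles ps) in I3 by (apply (ex_RInt_continuous ps); intros; apply Hc).
  apply (is_RInt_unique phi) in I3. rewrite I3.
  apply int_psi; auto.
Qed.

Lemma hansen_p2 e : 0 <= e < 1 -> hansen (-3) 2 0 e = 0.
Proof.
  intros He. unfold hansen.
  rewrite (hansen_zero e (IZR 2) He (or_introl eq_refl)).
  ring.
Qed.

Lemma hansen_m2 e : 0 <= e < 1 -> hansen (-3) (-2) 0 e = 0.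
Proof.
  intros He. unfold hansen.
  rewrite (hansen_zero e (IZR (-2)) He (or_intror eq_refl)).
  ring.
Qed.

Lemma sumZ_ext lo hi f g : (forall k, f k = g k) -> sumZ lo hi f = sumZ lo hi g.
Proof.
  intros H. unfold sumZ. f_equal. apply map_ext. intros; apply H.
Qed.

Lemma sumZ_012 f : sumZ 0 2 f = f 0%Z + f 1%Z + f 2%Z.
Proof. unfold sumZ. simpl. ring. Qed.

Lemma G0 e : 0 <= e < 1 -> Gcoef 2 0 (2*0-2) e = 0.
Proof. intros. change (Gcoef 2 0 (2*0-2) e) with (hansen (-3) 2 0 e). apply hansen_p2; auto. Qed.
Lemma G2 e : 0 <= e < 1 -> Gcoef 2 2 (2*2-2) e = 0.
Proof. intros. change (Gcoef 2 2 (2*2-2) e) with (hansen (-3) (-2) 0 e). apply hansen_m2; auto. Qed.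

Theorem proposition2 :
  (forall (Gc mk eps a e I om Om M ak ek Ik omk omk' Omk Mk : R),
      0 < a -> 0 <= e < 1 -> 0 < ak -> 0 <= ek < 1 ->
      Rbar_Moon Gc mk eps a e I om Om M ak ek Ik omk Omk Mk
      = Rbar_Moon Gc mk eps a e I om Om M ak ek Ik omk' Omk Mk)
  /\
  (forall (Gc ms a e I om Om M as_ es Is oms oms' Oms Ms : R),
      0 < a -> 0 <= e < 1 -> 0 < as_ -> 0 <= es < 1 ->
      Rbar_Sun Gc ms a e I om Om M as_ es Is oms Oms Ms
      = Rbar_Sun Gc ms a e I om Om M as_ es Is oms' Oms Ms).
Proof.
  split.
  - intros Gc mk eps a e I om Om M ak ek Ik omk omk' Omk Mk _ _ _ Hek.
    unfold Rbar_Moon.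
    apply sumZ_ext; intro m. apply sumZ_ext; intro p. apply sumZ_ext; intro s.
    rewrite !sumZ_012. unfold moon_term. cbv zeta.
    rewrite !G0, !G2 by auto.
    replace (IZR (2 - 2 * 1)) with 0 by reflexivity.
    rewrite !Rmult_0_l. ring.
  - intros Gc ms a e I om Om M as_ es Is oms oms' Oms Ms _ _ _ Hes.
    unfold Rbar_Sun.
    apply sumZ_ext; intro m. apply sumZ_ext; intro p.
    rewrite !sumZ_012. unfold sun_term.
    rewrite !G0, !G2 by auto.
    replace (IZR (2 - 2 * 1)) with 0 by reflexivity.
    rewrite !Rmult_0_l. ring.
Qed.
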